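(* Let $H$ be a real or complex Hilbert space of dimension $n$, let $N\ge n$, let $F=\{f_i\}_{i=1}^N$ be a frame for $H$ with frame operator $S_F$, and let $\{q_i\}_{i=1}^N$ be a weight number sequence. Set $c=\max\{q_i\|f_i\|\,\|S_F^{-1}f_i\|:1\le i\le N\}$, $\varrho_1=\{i:q_i\|f_i\|\,\|S_F^{-1}f_i\|=c\}$, $\varrho_2=\{1,\dots,N\}\setminus\varrho_1$, and $H_j=\operatorname{span}\{f_i:i\in\varrho_j\}$ for $j=1,2$. Suppose $H_1\cap H_2=\{0\}$ and $\{f_i:i\in\varrho_2\}$ is linearly independent. Then the canonical dual $\{S_F^{-1}f_i\}_{i=1}^N$ is the unique 1-erasure probabilistic optimal dual of $F$, and therefore it is an $m$-erasure probabilistic optimal dual of $F$ for every $m$.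
   Context: Inner products are linear in the first argument. A frame for $H$ is a finite sequence spanning $H$. Analysis operator: $\Theta_F f=(\langle f,f_i\rangle)_i$. Synthesis operator: $\Theta_G^*(c)=\sum_ic_ig_i$. Frame operator: $S_F=\Theta_F^*\Theta_F$. A dual of $F$ is a frame $G=\{g_i\}_{i=1}^N$ with $f=\sum_i\langle f,f_i\rangle g_i=\sum_i\langle f,g_i\rangle f_i$ for all $f$. A probability sequence satisfies $0\le p_i\le1$ and $\sum p_i=1$. Weight numbers: $q_i=\frac{\sum_jp_j}{\sum_jp_j-p_i}\cdot\frac{N-1}{n}$ (assumed well defined). For $1\le m\le N$, $\mathcal{D}_m^p$ is the set of $N\times N$ diagonal matrices $D$ for which there is $\Lambda$ with $|\Lambda|=m$, $D_{ii}=q_i$ for $i\in\Lambda$ and $0$ otherwise. $d_m^p(F,G)=\max\{\|\Theta_G^*D\Theta_F\|:D\in\mathcal{D}_m^p\}$ (operator norm). Optimal duals are defined recursively: - $G$ is a 1-erasure probabilistic optimal dual of $F$ if $d_1^p(F,G)=\mu_1(F):=\inf\{d_1^p(F,G'):G'\text{ a dual of }F\}$; - for $m\ge2$, $G$ is an $m$-erasure probabilistic optimal dual of $F$ if it is an $(m-1)$-erasure probabilistic optimal dual and $d_m^p(F,G)=\mu_m(F):=\inf\{d_m^p(F,G'):G'\text{ an }(m-1)\text{-erasure probabilistic optimal dual of }F\}$. *)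

(* Defs.v *)
From HB Require Import structures.
From mathcomp Require Import all_boot all_order all_algebra.
From mathcomp Require Import classical_sets reals.
From mathcomp Require Import complex.

Set Implicit Arguments.
Unset Strict Implicit.
Unset Printing Implicit Defensive.

Import Order.TTheory GRing.Theory Num.Theory.
Local Open Scope ring_scope.

(* Finite frames in H = K^n (column vectors 'cV[K]_n), where the scalar
   field K is either R (real case) or R[i] (complex case).  The generic
   definitions below are parameterized by:
     cj  : K -> K   conjugation (identity for R, conjc for R[i]),
     toR : K -> R   real part (identity for R, Re for R[i]),
     ofR : R -> K   embedding of reals into K.
   Inner product <x, y> = sum_k x_k * cj (y_k), linear in the first argument. *)

Section Frames.
Variables (R : realType) (K : numFieldType).
Variables (cj : K -> K) (toR : K -> R) (ofR : R -> K).
Variables (n N : nat).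

Definition vec := 'cV[K]_n.
Definition fseq := 'I_N -> vec.

Definition inner (x y : vec) : K := \sum_(k < n) x k 0 * cj (y k 0).

Definition vnorm (x : vec) : R := Num.sqrt (toR (inner x x)).

Definition opnorm (A : 'M[K]_n) : R :=
  sup [set vnorm (A *m x) | x in [set x : vec | vnorm x <= 1]]%classic.

Definition in_span (f : fseq) (S : {set 'I_N}) (x : vec) : Prop :=
  exists c : 'I_N -> K, x = \sum_(i in S) c i *: f i.

Definition is_frame (f : fseq) : Prop := forall x : vec, in_span f [set: 'I_N] x.

Definition lin_indep (f : fseq) (S : {set 'I_N}) : Prop :=
  forall c : 'I_N -> K, \sum_(i in S) c i *: f i = 0 -> forall i, i \in S -> c i = 0.

(* analysis operator Theta_F : H -> K^N, (Theta_F x)_i = <x, f_i> *)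
Definition analysis (f : fseq) : 'M[K]_(N, n) := \matrix_(i, k) cj (f i k 0).
Definition synthesis (g : fseq) : 'M[K]_(n, N) := \matrix_(k, i) g i k 0.
Definition frame_op (f : fseq) : 'M[K]_n := synthesis f *m analysis f.
Definition canonical_dual (f : fseq) : fseq := fun i => invmx (frame_op f) *m f i.

Definition is_dual (f g : fseq) : Prop :=
  is_frame g /\
  forall x : vec, x = \sum_i inner x (f i) *: g i /\ x = \sum_i inner x (g i) *: f i.

Definition prob_seq (p : 'I_N -> R) : Prop :=
  (forall i, 0 <= p i <= 1) /\ \sum_i p i = 1.

Definition weight (p : 'I_N -> R) (i : 'I_N) : R :=
  (\sum_j p j) / (\sum_j p j - p i) * ((N - 1)%:R / n%:R).

Definition Dmat (p : 'I_N -> R) (L : {set 'I_N}) : 'M[K]_N :=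
  \matrix_(i, j) (if (i == j) && (i \in L) then ofR (weight p i) else 0).

Definition dmp (p : 'I_N -> R) (m : nat) (f g : fseq) : R :=
  \big[Num.max/0]_(L : {set 'I_N} | #|L| == m)
     opnorm (synthesis g *m Dmat p L *m analysis f).

Fixpoint opt_dual (p : 'I_N -> R) (m : nat) (f g : fseq) : Prop :=
  match m with
  | 0 => is_dual f g
  | m'.+1 =>
      opt_dual p m' f g /\
      dmp p m'.+1 f g = inf [set dmp p m'.+1 f g' | g' in [set g' | opt_dual p m' f g']]%classic
  end.

End Frames.

Definition cor41_stmt (R : realType) (K : numFieldType)
  (cj : K -> K) (toR : K -> R) (ofR : R -> K) : Prop :=
  forall (n N : nat) (f : fseq K n N) (p : 'I_N -> R),
    (n <= N)%N ->
    is_frame f ->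
    prob_seq p ->
    (forall i, \sum_j p j - p i != 0) ->
    let cf := fun i => weight n p i * vnorm cj toR (f i)
                         * vnorm cj toR (canonical_dual cj f i) in
    let c := \big[Num.max/0]_i cf i in
    let rho1 := [set i | cf i == c] in
    let rho2 := ~: rho1 in
    (forall x, in_span f rho1 x -> in_span f rho2 x -> x = 0) ->
    lin_indep f rho2 ->
    (opt_dual cj toR ofR p 1 f (canonical_dual cj f) /\
     (forall g, opt_dual cj toR ofR p 1 f g -> g = canonical_dual cj f)) /\
    (forall m, (1 <= m <= N)%N -> opt_dual cj toR ofR p m f (canonical_dual cj f)).

(* Main.v *)
Require Import Defs.
From HB Require Import structures.
From mathcomp Require Import all_boot all_order all_algebra.
From mathcomp Require Import classical_sets reals.
From mathcomp Require Import complex.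
From mathcomp Require Import ring lra zify.
Module Work.
Set Implicit Arguments.
Unset Strict Implicit.
Unset Printing Implicit Defensive.
Import Order.TTheory GRing.Theory Num.Theory.
Local Open Scope ring_scope.

Section Gen.
Variables (R : realType) (K : numFieldType).
Variables (cj : K -> K) (toR : K -> R) (ofR : R -> K).
Hypothesis cjD : forall x y, cj (x + y) = cj x + cj y.
Hypothesis cjM : forall x y, cj (x * y) = cj x * cj y.
Hypothesis cjK : forall x, cj (cj x) = x.
Hypothesis ofRD : forall a b, ofR (a + b) = ofR a + ofR b.
Hypothesis ofRM : forall a b, ofR (a * b) = ofR a * ofR b.
Hypothesis ofR1 : ofR 1 = 1.
Hypothesis cj_ofR : forall r, cj (ofR r) = ofR r.
Hypothesis toRD : forall x y, toR (x + y) = toR x + toR y.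
Hypothesis toR_ofR : forall r, toR (ofR r) = r.
Hypothesis toR_ofRM : forall r x, toR (ofR r * x) = r * toR x.
Hypothesis zcz_real : forall x, x * cj x = ofR (toR (x * cj x)).
Hypothesis zcz_ge0 : forall x, 0 <= toR (x * cj x).
Hypothesis zcz_eq0 : forall x, toR (x * cj x) = 0 -> x = 0.

Lemma cj0 : cj 0 = 0.
Proof. by apply/(addrI (cj 0)); rewrite -cjD !addr0. Qed.
Lemma toR0 : toR 0 = 0.
Proof. by apply/(addrI (toR 0)); rewrite -toRD !addr0. Qed.
Lemma ofR0 : ofR 0 = 0.
Proof. by apply/(addrI (ofR 0)); rewrite -ofRD !addr0. Qed.
Lemma cjN x : cj (- x) = - cj x.
Proof. by apply/(addrI (cj x)); rewrite -cjD !subrr cj0. Qed.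
Lemma toRN x : toR (- x) = - toR x.
Proof. by apply/(addrI (toR x)); rewrite -toRD !subrr toR0. Qed.
Lemma cjB x y : cj (x - y) = cj x - cj y.
Proof. by rewrite cjD cjN. Qed.
Lemma cj1 : cj 1 = 1.
Proof. by rewrite -ofR1 cj_ofR. Qed.
Lemma cj_sum (I : Type) (r : seq I) (P : pred I) (F : I -> K) :
  cj (\sum_(i <- r | P i) F i) = \sum_(i <- r | P i) cj (F i).
Proof. exact: (big_morph cj cjD cj0). Qed.
Lemma toR_sum (I : Type) (r : seq I) (P : pred I) (F : I -> K) :
  toR (\sum_(i <- r | P i) F i) = \sum_(i <- r | P i) toR (F i).
Proof. exact: (big_morph toR toRD toR0). Qed.
Lemma ofR_sum (I : Type) (r : seq I) (P : pred I) (F : I -> R) :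
  ofR (\sum_(i <- r | P i) F i) = \sum_(i <- r | P i) ofR (F i).
Proof. exact: (big_morph ofR ofRD ofR0). Qed.
Lemma toR_ofR2 a : toR (ofR a * cj (ofR a)) = a ^+ 2.
Proof. by rewrite cj_ofR toR_ofRM toR_ofR expr2. Qed.
Lemma ofRV a : a != 0 -> ofR a^-1 = (ofR a)^-1.
Proof.
move=> a0; have h : ofR a^-1 * ofR a = 1 by rewrite -ofRM mulVf // ofR1.
have oa : ofR a != 0.
  by apply/eqP => e; move: h; rewrite e mulr0 => /eqP; rewrite eq_sym oner_eq0.
by apply/(mulIf oa); rewrite h mulVf.
Qed.

Section Dim.
Variable n : nat.
Local Notation vec := (vec K n).
Local Notation inner := (@inner K cj n).
Definition nrm2 (x : vec) := toR (inner x x).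
Local Notation vnorm := (@vnorm R K cj toR n).

Lemma vnormE x : vnorm x = Num.sqrt (nrm2 x). Proof. by []. Qed.

Lemma innerC x y : inner y x = cj (inner x y).
Proof. rewrite /inner cj_sum; apply: eq_bigr => k _; by rewrite cjM cjK mulrC. Qed.
Lemma innerDl x y z : inner (x + y) z = inner x z + inner y z.
Proof. rewrite /inner -big_split; apply: eq_bigr => k _; by rewrite mxE mulrDl. Qed.
Lemma innerZl a x y : inner (a *: x) y = a * inner x y.
Proof. rewrite /inner mulr_sumr; apply: eq_bigr => k _; by rewrite mxE mulrA. Qed.
Lemma innerNl x y : inner (- x) y = - inner x y.
Proof. rewrite /inner -sumrN; apply: eq_bigr => k _; by rewrite mxE mulNr. Qed.
Lemma inner0l y : inner 0 y = 0.
Proof. rewrite /inner big1 // => k _; by rewrite mxE mul0r. Qed.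
Lemma innerBl x y z : inner (x - y) z = inner x z - inner y z.
Proof. by rewrite innerDl innerNl. Qed.
Lemma innerDr x y z : inner z (x + y) = inner z x + inner z y.
Proof. by rewrite innerC innerDl cjD -!innerC. Qed.
Lemma innerBr x y z : inner z (x - y) = inner z x - inner z y.
Proof. by rewrite innerC innerBl cjB -!innerC. Qed.
Lemma innerZr a x y : inner y (a *: x) = cj a * inner y x.
Proof. by rewrite innerC innerZl cjM -innerC. Qed.
Lemma inner0r y : inner y 0 = 0.
Proof. by rewrite innerC inner0l cj0. Qed.
Lemma inner_suml (I : Type) (r : seq I) (P : pred I) (F : I -> vec) y :
  inner (\sum_(i <- r | P i) F i) y = \sum_(i <- r | P i) inner (F i) y.
Proof. exact: (big_morph (fun x => inner x y) (fun a b => innerDl a b y) (inner0l y)). Qed.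
Lemma inner_sumr (I : Type) (r : seq I) (P : pred I) (F : I -> vec) y :
  inner y (\sum_(i <- r | P i) F i) = \sum_(i <- r | P i) inner y (F i).
Proof. exact: (big_morph (fun x => inner y x) (fun a b => innerDr a b y) (inner0r y)). Qed.

Lemma inner_real x : inner x x = ofR (nrm2 x).
Proof.
rewrite /nrm2 /inner toR_sum ofR_sum; apply: eq_bigr => k _; exact: zcz_real.
Qed.
Lemma nrm2_ge0 x : 0 <= nrm2 x.
Proof. rewrite /nrm2 /inner toR_sum; apply: sumr_ge0 => k _; exact: zcz_ge0. Qed.
Lemma nrm2_eq0 x : nrm2 x = 0 -> x = 0.
Proof.
rewrite /nrm2 /inner toR_sum => /eqP; rewrite psumr_eq0; last by move=> k _; exact: zcz_ge0.
move=> /allP H; apply/matrixP => i j; rewrite (ord1 j) mxE; apply: zcz_eq0.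
by apply/eqP; apply: (H i); rewrite mem_index_enum.
Qed.
Lemma nrm20 : nrm2 0 = 0.
Proof. by rewrite /nrm2 inner0l toR0. Qed.
Lemma nrm2Z a x : nrm2 (a *: x) = toR (a * cj a) * nrm2 x.
Proof.
by rewrite /nrm2 innerZl innerZr mulrA zcz_real toR_ofRM toR_ofR.
Qed.

Lemma ofRN a : ofR (- a) = - ofR a.
Proof. by apply/(addrI (ofR a)); rewrite -ofRD !subrr ofR0. Qed.

Lemma CS x y : toR (inner x y * cj (inner x y)) <= nrm2 x * nrm2 y.
Proof.
have [/nrm2_eq0 ->|yn0] := eqVneq (nrm2 y) 0.
  by rewrite inner0r cj0 mulr0 toR0 nrm20 mulr0.
have bgt0 : 0 < nrm2 y by rewrite lt_def yn0 nrm2_ge0.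
set z := inner x y; set b := nrm2 y; set a := nrm2 x.
set t := z * ofR b^-1.
have hB : ofR b^-1 * ofR b = 1 by rewrite -ofRM mulVf // ofR1.
have := nrm2_ge0 (x - t *: y).
rewrite /nrm2 innerBl !innerBr !innerZl !innerZr (innerC x y) -/z.
rewrite !inner_real -/a -/b /t cjM cj_ofR.
have -> : ofR a - cj z * ofR b^-1 * z -
     (z * ofR b^-1 * cj z - z * ofR b^-1 * (cj z * ofR b^-1 * ofR b))
   = ofR a - z * cj z * ofR b^-1.
  by rewrite -[cj z * ofR b^-1 * ofR b]mulrA hB mulr1; ring.
rewrite zcz_real -ofRM -ofRN -ofRD toR_ofR subr_ge0.
by rewrite ler_pdivrMr // toR_ofR.
Qed.
End Dim.

Definition adj m p (X : 'M[K]_(m, p)) : 'M[K]_(p, m) := \matrix_(i, j) cj (X j i).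

Lemma adjM m p q (X : 'M[K]_(m, p)) (Y : 'M[K]_(p, q)) : adj (X *m Y) = adj Y *m adj X.
Proof.
apply/matrixP => i j; rewrite !mxE cj_sum; apply: eq_bigr => k _.
by rewrite !mxE cjM mulrC.
Qed.
Lemma adjK m p (X : 'M[K]_(m, p)) : adj (adj X) = X.
Proof. by apply/matrixP => i j; rewrite !mxE cjK. Qed.
Lemma adj1 m : adj (1%:M : 'M[K]_m) = 1%:M.
Proof.
apply/matrixP => i j; rewrite !mxE eq_sym; case: (i == j); by rewrite /= ?cj1 ?cj0.
Qed.

Section Frames.
Variables n N : nat.
Local Notation vec := (vec K n).
Local Notation fseq := (fseq K n N).
Local Notation inner := (@inner K cj n).
Local Notation analysis := (@analysis K cj n N).
Local Notation synthesis := (@synthesis K n N).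

Lemma adj_synth (g : fseq) : adj (synthesis g) = analysis g.
Proof. by apply/matrixP => i j; rewrite !mxE. Qed.
Lemma adj_anal (g : fseq) : adj (analysis g) = synthesis g.
Proof. by apply/matrixP => i j; rewrite !mxE cjK. Qed.

Lemma anal_mulE (f : fseq) (x : vec) i : (analysis f *m x) i 0 = inner x (f i).
Proof. rewrite mxE /inner; apply: eq_bigr => k _; by rewrite mxE mulrC. Qed.

Lemma synth_mul (g : fseq) (c : 'cV[K]_N) : synthesis g *m c = \sum_i c i 0 *: g i.
Proof.
apply/matrixP => k j; rewrite (ord1 j) !mxE summxE; apply: eq_bigr => i _.
by rewrite !mxE mulrC.
Qed.

Lemma synth_anal (g f : fseq) (x : vec) :
  synthesis g *m (analysis f *m x) = \sum_i inner x (f i) *: g i.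
Proof. by rewrite synth_mul; apply: eq_bigr => i _; rewrite anal_mulE. Qed.

Lemma mat_ext0 m (M : 'M[K]_(m, n)) : (forall x : vec, M *m x = 0) -> M = 0.
Proof.
move=> H; apply/matrixP => i j.
have := congr1 (fun A : 'M_(m, 1) => A i 0) (H (delta_mx j 0)).
by rewrite -colE !mxE.
Qed.

Variable f : fseq.
Hypothesis hf : is_frame f.
Local Notation S := (frame_op cj f).
Local Notation h := (canonical_dual cj f).

Lemma S_inj (x : vec) : S *m x = 0 -> x = 0.
Proof.
move=> Sx.
have z0 : forall i, inner x (f i) = 0.
  have : inner (S *m x) x = 0 by rewrite Sx inner0l.
  rewrite /frame_op -mulmxA synth_anal inner_suml.
  under eq_bigr do rewrite innerZl (innerC x (f _)).
  move=> /(congr1 toR); rewrite toR_sum toR0 => /eqP.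
  rewrite psumr_eq0 => [/allP H i|i _]; last exact: zcz_ge0.
  by apply: zcz_eq0; apply/eqP; apply: H; rewrite mem_index_enum.
apply: nrm2_eq0; rewrite /nrm2; have [c hc] := hf x.
by rewrite {2}hc inner_sumr big1 ?toR0 // => i _; rewrite innerZr z0 mulr0.
Qed.

Lemma S_unit : S \in unitmx.
Proof.
rewrite -unitmx_tr -row_free_unit -kermx_eq0; apply/eqP/row_matrixP => i; rewrite row0.
set u := row i _.
have hu : u *m S^T = 0 by apply/sub_kermxP; exact: row_sub.
have : S *m u^T = 0 by rewrite -[S]trmxK -trmx_mul hu trmx0.
by move/S_inj => hu0; rewrite -[u]trmxK hu0 trmx0.
Qed.

Lemma adjS : adj S = S.
Proof. by rewrite /frame_op adjM adj_anal adj_synth. Qed.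

Lemma adj_invS : adj (invmx S) = invmx S.
Proof.
have H : adj (invmx S) *m S = 1%:M by rewrite -{2}adjS -adjM mulmxV ?S_unit // adj1.
by rewrite -[adj _]mulmx1 -(mulmxV S_unit) mulmxA H mul1mx.
Qed.

Lemma synth_h : synthesis h = invmx S *m synthesis f.
Proof. by apply/matrixP => k i; rewrite !mxE; apply: eq_bigr => j _; rewrite !mxE. Qed.

Lemma anal_h : analysis h = analysis f *m invmx S.
Proof. by rewrite -adj_synth synth_h adjM adj_invS adj_synth. Qed.

Lemma dual_h : is_dual cj f h.
Proof.
have e1 : forall x, x = \sum_i inner x (f i) *: h i.
  move=> x; rewrite -synth_anal synth_h -mulmxA (mulmxA (synthesis f)).
  by rewrite mulKmx // S_unit.
split; last split => //.
  move=> x; exists (fun i => inner x (f i)); rewrite {1}(e1 x).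
  by apply: eq_bigl => i; rewrite finset.in_setT.
by rewrite -synth_anal anal_h -mulmxA mulmxA mulKVmx // S_unit.
Qed.

Local Notation vnorm := (@vnorm R K cj toR n).
Local Notation opnorm := (@opnorm R K cj toR n).

Lemma Dmat_mulE (p : 'I_N -> R) L (z : 'cV[K]_N) j :
  (Dmat ofR n p L *m z) j 0 = (if j \in L then ofR (weight n p j) else 0) * z j 0.
Proof.
rewrite mxE (bigD1 j) //= big1 => [|k kj]; rewrite !mxE.
  by rewrite eqxx /= addr0.
by rewrite eq_sym (negbTE kj) /= mul0r.
Qed.

Lemma M1E (p : 'I_N -> R) (g : fseq) i (x : vec) :
  synthesis g *m Dmat ofR n p [set i] *m analysis f *m x
  = (ofR (weight n p i) * inner x (f i)) *: g i.
Proof.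
rewrite -!mulmxA synth_mul (bigD1 i) //= big1 => [|j ji];
  rewrite Dmat_mulE ?finset.in_set1 ?eqxx ?(negbTE ji) ?anal_mulE.
  by rewrite addr0.
by move=> *; rewrite mul0r scale0r.
Qed.

Lemma sqrt_le_sq (a b : R) : 0 <= b -> a <= b ^+ 2 -> Num.sqrt a <= b.
Proof.
move=> b0 ab; apply: (le_trans (ler_wsqrtr ab)).
by rewrite sqrtr_sqr ger0_norm.
Qed.

Lemma vnorm_ge0 (x : vec) : 0 <= vnorm x.
Proof. exact: sqrtr_ge0. Qed.

Lemma vnorm_le1 (x : vec) : vnorm x <= 1 -> nrm2 x <= 1.
Proof. by rewrite vnormE => h; rewrite -ler_sqrt ?ler01 // sqrtr1. Qed.

Lemma opnorm_ub (A : 'M[K]_n) (b : R) :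
  (forall x : vec, nrm2 x <= 1 -> vnorm (A *m x) <= b) -> opnorm A <= b.
Proof.
move=> H; rewrite /Defs.opnorm; apply: ge_sup.
  exists (vnorm (A *m 0)); exists 0 => //=.
  by rewrite vnormE nrm20 sqrtr0 ler01.
by move=> y [x hx <-]; apply: H; apply: vnorm_le1.
Qed.

Lemma opnorm_lb (A : 'M[K]_n) (b : R) (x : vec) :
  (forall y : vec, nrm2 y <= 1 -> vnorm (A *m y) <= b) ->
  nrm2 x <= 1 -> vnorm (A *m x) <= opnorm A.
Proof.
move=> H hx; rewrite /Defs.opnorm; apply: ub_le_sup.
  by exists b => y [z hz <-]; apply: H; apply: vnorm_le1.
by exists x => //=; rewrite vnormE -sqrtr1 ler_wsqrtr.
Qed.

Lemma M1_ub (p : 'I_N -> R) (g : fseq) i (x : vec) :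
  0 <= weight n p i -> nrm2 x <= 1 ->
  vnorm (synthesis g *m Dmat ofR n p [set i] *m analysis f *m x)
  <= weight n p i * vnorm (f i) * vnorm (g i).
Proof.
move=> q0 hx; rewrite M1E vnormE nrm2Z.
move: (weight n p i) q0 => q q0; set z := inner x (f i).
have -> : ofR q * z * cj (ofR q * z) = ofR (q * q) * (z * cj z).
  by rewrite cjM cj_ofR ofRM; ring.
rewrite toR_ofRM; apply: sqrt_le_sq.
  by rewrite !mulr_ge0 // vnorm_ge0.
rewrite !exprMn !vnormE !sqr_sqrtr ?nrm2_ge0 // expr2.
rewrite ler_wpM2r ?nrm2_ge0 // ler_wpM2l ?mulr_ge0 //.
apply: (le_trans (CS x (f i))).
by rewrite -[X in _ <= X]mul1r ler_wpM2r ?nrm2_ge0.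
Qed.
Lemma vnormZR (a : R) (v : vec) : 0 <= a -> vnorm (ofR a *: v) = a * vnorm v.
Proof.
move=> a0; rewrite !vnormE nrm2Z toR_ofR2 sqrtrM ?sqr_ge0 //.
by rewrite sqrtr_sqr ger0_norm.
Qed.

Lemma M1_lb (p : 'I_N -> R) (g : fseq) i :
  0 <= weight n p i ->
  weight n p i * vnorm (f i) * vnorm (g i)
  <= opnorm (synthesis g *m Dmat ofR n p [set i] *m analysis f).
Proof.
move=> q0.
have ub := fun x => @M1_ub p g i x q0.
have [f0|fn0] := eqVneq (nrm2 (f i)) 0.
  rewrite vnormE f0 sqrtr0 mulr0 mul0r.
  apply: le_trans (opnorm_lb (x := 0) ub _); first exact: vnorm_ge0.
  by rewrite nrm20 ler01.
set r := vnorm (f i).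
have r0 : 0 < r by rewrite /r vnormE sqrtr_gt0 lt_def fn0 nrm2_ge0.
have r2 : nrm2 (f i) = r ^+ 2 by rewrite /r vnormE sqr_sqrtr ?nrm2_ge0.
have hx : nrm2 (ofR r^-1 *: f i) <= 1.
  rewrite nrm2Z toR_ofR2 r2 -exprMn mulVf ?expr1n //; exact: lt0r_neq0.
apply: le_trans (opnorm_lb ub hx).
rewrite M1E innerZl inner_real r2 -!ofRM vnormZR; last first.
  by rewrite mulr_ge0 // mulr_ge0 // ?invr_ge0 ?sqr_ge0 // ltW.
rewrite expr2 [r^-1 * _]mulrA mulVf ?mul1r //; exact: lt0r_neq0.
Qed.
Local Notation M1 p g i := (synthesis g *m Dmat ofR n p [set i] *m analysis f).

Lemma dmp_ge0 (p : 'I_N -> R) m (g : fseq) : 0 <= dmp cj toR ofR p m f g.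
Proof. exact: bigmax_ge_id. Qed.

Lemma opnorm_le_dmp1 (p : 'I_N -> R) (g : fseq) i :
  opnorm (M1 p g i) <= dmp cj toR ofR p 1 f g.
Proof.
rewrite /dmp; apply: (le_bigmax_cond _ (fun L => opnorm (synthesis g *m Dmat ofR n p L *m analysis f))).
by rewrite cards1.
Qed.

Lemma dmp1_le (p : 'I_N -> R) (g : fseq) b :
  0 <= b -> (forall i, opnorm (M1 p g i) <= b) -> dmp cj toR ofR p 1 f g <= b.
Proof.
move=> b0 H; rewrite /dmp; apply: bigmax_le => // L /cards1P [i ->]; exact: H.
Qed.

Variable p : 'I_N -> R.
Hypothesis hp : prob_seq p.
Hypothesis hpi : forall i, \sum_j p j - p i != 0.

Lemma weight_ge0 i : 0 <= weight n p i.
Proof.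
rewrite /weight; case: hp => hp1 ->.
apply: mulr_ge0; apply: divr_ge0 => //.
by rewrite subr_ge0; case/andP: (hp1 i).
Qed.

Lemma weight_eq0 i : weight n p i = 0 -> ((N - 1)%N == 0%N) || (n == 0%N).
Proof.
rewrite /weight => /eqP; rewrite !mulf_eq0 invr_eq0 (negbTE (hpi i)) /=.
case: hp => _ ->; by rewrite oner_eq0 /= invr_eq0 !pnatr_eq0.
Qed.

Local Notation cf i := (weight n p i * vnorm (f i) * vnorm (h i)).

Lemma core (c : R) :
  c = \big[Num.max/0]_i cf i ->
  (forall x, in_span f [set i | cf i == c] x -> in_span f (~: [set i | cf i == c]) x -> x = 0) ->
  lin_indep f (~: [set i | cf i == c]) ->
  forall g : fseq, is_dual cj f g -> dmp cj toR ofR p 1 f g <= dmp cj toR ofR p 1 f h -> g = h.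
Proof.
set rho1 := [set i | cf i == c].
move=> hc Hsp Hli g [_ hg] hle.
pose u := fun i => g i - h i.
have hgu : forall i, g i = h i + u i by move=> i; rewrite /u addrC subrK.
have BU : synthesis f *m analysis u = 0.
  apply: mat_ext0 => x; rewrite -mulmxA synth_anal.
  under eq_bigr do rewrite innerBr scalerBl.
  by rewrite sumrB -(proj2 (hg x)) -(proj2 (proj2 dual_h x)) subrr.
have BUx : forall x, \sum_i inner x (u i) *: f i = 0.
  by move=> x; rewrite -synth_anal mulmxA BU mul0mx.
have TR : \sum_i inner (h i) (u i) = 0.
  have -> : \sum_i inner (h i) (u i) = \tr (analysis u *m synthesis h).
    rewrite /mxtrace; apply: eq_bigr => i _; rewrite !mxE /inner.
    by apply: eq_bigr => k _; rewrite !mxE mulrC.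
  by rewrite synth_h mulmxA mxtrace_mulC mulmxA BU mul0mx mxtrace0.
have R2 : forall i, i \in ~: rho1 -> u i = 0.
  move=> i hi.
  have ip : forall x, inner x (u i) = 0.
    move=> x; set v := \sum_(j in rho1) inner x (u j) *: f j.
    have hsplit : v + \sum_(j in ~: rho1) inner x (u j) *: f j = 0.
      rewrite -[RHS](BUx x) [RHS](bigID (fun j => j \in rho1)) /=; congr (_ + _).
      by apply: eq_bigl => j; rewrite inE.
    have v0 : v = 0.
      apply: Hsp; first by exists (fun j => inner x (u j)).
      exists (fun j => - inner x (u j)).
      have -> : v = - \sum_(j in ~: rho1) inner x (u j) *: f j.
        by apply/eqP; rewrite -addr_eq0 hsplit.
      by rewrite -sumrN; apply: eq_bigr => j _; rewrite scaleNr.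
    move: hsplit; rewrite v0 add0r => hs.
    exact: (Hli (fun j => inner x (u j)) hs).
  by apply: nrm2_eq0; rewrite /nrm2 ip toR0.
have c0 : 0 <= c by rewrite hc; exact: bigmax_ge_id.
have cfle : forall i, cf i <= c by move=> i; rewrite hc; exact: (le_bigmax _ (fun i => cf i)).
have dmph : dmp cj toR ofR p 1 f h <= c.
  apply: dmp1_le => // i; apply: le_trans (cfle i).
  apply: opnorm_ub => x hx; exact: M1_ub (weight_ge0 i) hx.
have gle : forall i, weight n p i * vnorm (f i) * vnorm (g i) <= c.
  move=> i; apply: le_trans (M1_lb g (weight_ge0 i)) _.
  by apply: le_trans (opnorm_le_dmp1 p g i) (le_trans hle dmph).
have [cz|cn0] := eqVneq c 0.
  case: (pickP (fun i => f i != 0)) => [i0 fi0|allf0]; last first.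
    have V0 : forall x : vec, x = 0.
      move=> x; have [cc ->] := hf x; apply: big1 => i _.
      by move/negbFE: (allf0 i) => /eqP ->; rewrite scaler0.
    by apply: boolp.funext => j; rewrite (V0 (g j)) (V0 (h j)).
  have cf0 : cf i0 = 0.
    have := cfle i0; rewrite cz => H1; apply/le_anti; rewrite H1 /=.
    by rewrite mulr_ge0 ?vnorm_ge0 // mulr_ge0 ?vnorm_ge0 ?weight_ge0.
  have fpos : 0 < vnorm (f i0).
    rewrite vnormE sqrtr_gt0 lt_def nrm2_ge0 andbT.
    by apply/eqP => /nrm2_eq0 f0; move: fi0; rewrite f0 eqxx.
  have hpos : 0 < vnorm (h i0).
    rewrite vnormE sqrtr_gt0 lt_def nrm2_ge0 andbT.
    apply/eqP => /nrm2_eq0 h0; move: fi0.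
    have : S *m h i0 = f i0 by rewrite /canonical_dual mulKVmx // S_unit.
    by rewrite h0 mulmx0 => <-; rewrite eqxx.
  have w0 : weight n p i0 = 0.
    move/eqP: cf0; rewrite mulf_eq0 (gt_eqF hpos) orbF mulf_eq0 (gt_eqF fpos) orbF => /eqP //.
  case/orP: (weight_eq0 w0) => [N1|n0]; last first.
    have : f i0 = 0 by apply/matrixP => -[k kn] l; exfalso; move/eqP: n0 => n0; lia.
    by move=> f0; move: fi0; rewrite f0 eqxx.
  have jE : forall j : 'I_N, j = i0.
    move=> j; apply/val_inj => /=; move/eqP: N1 => N1.
    move: (ltn_ord j) (ltn_ord i0); lia.
  have ip : forall x, inner x (u i0) = 0.
    move=> x; have := BUx x; rewrite (bigD1 i0) //= big1 => [|j ji]; last first.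
      by move: ji; rewrite (jE j) eqxx.
    by rewrite addr0 => /eqP; rewrite scaler_eq0 (negbTE fi0) orbF => /eqP.
  have ui0 : u i0 = 0 by apply: nrm2_eq0; rewrite /nrm2 ip toR0.
  by apply: boolp.funext => j; rewrite hgu (jE j) ui0 addr0.
have cpos : 0 < c by rewrite lt_def cn0 c0.
have R1 : forall i, i \in rho1 -> nrm2 (g i) <= nrm2 (h i).
  move=> i; rewrite inE => /eqP hi.
  have a0 : 0 <= weight n p i * vnorm (f i) by rewrite mulr_ge0 ?weight_ge0 ?vnorm_ge0.
  have apos : 0 < weight n p i * vnorm (f i).
    rewrite lt_def a0 andbT; apply/eqP => a00; move: cn0.
    by rewrite -hi a00 mul0r eqxx.
  by have := gle i; rewrite -hi ler_pM2l // !vnormE ler_sqrt ?nrm2_ge0.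
have E : forall i, toR (inner (h i) (u i)) + toR (inner (u i) (h i)) + nrm2 (u i) <= 0.
  move=> i; case: (boolP (i \in rho1)) => hi.
    have := R1 i hi; rewrite hgu /nrm2 innerDl !innerDr !toRD => H; lra.
  have ui : u i = 0 by apply: R2; rewrite finset.in_setC hi.
  by rewrite ui inner0r innerC inner0r cj0 toR0 nrm20 !addr0.
have S0 : \sum_i nrm2 (u i) <= 0.
  have : \sum_i (toR (inner (h i) (u i)) + toR (inner (u i) (h i)) + nrm2 (u i)) <= 0.
    by apply: le_trans (ler_sum _ (fun i _ => E i)) _; rewrite big1.
  rewrite !big_split /= -!toR_sum TR.
  rewrite (eq_bigr _ (fun i _ => innerC (h i) (u i))) -cj_sum TR cj0 toR0 !add0r //.
have U0 : forall i, u i = 0.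
  have : \sum_i nrm2 (u i) = 0.
    by apply/le_anti; rewrite S0 sumr_ge0 // => j _; exact: nrm2_ge0.
  move=> Hs i; apply: nrm2_eq0; exact: (psumr_eq0P (fun j _ => nrm2_ge0 (u j)) Hs).
by apply: boolp.funext => i; rewrite hgu U0 addr0.
Qed.

Section Opt.
Variable (c : R).
Hypothesis hc : c = \big[Num.max/0]_i cf i.
Hypothesis Hsp : forall x, in_span f [set i | cf i == c] x -> in_span f (~: [set i | cf i == c]) x -> x = 0.
Hypothesis Hli : lin_indep f (~: [set i | cf i == c]).

Lemma hmin g : is_dual cj f g -> dmp cj toR ofR p 1 f h <= dmp cj toR ofR p 1 f g.
Proof.
move=> hgd; case: (leP (dmp cj toR ofR p 1 f h) (dmp cj toR ofR p 1 f g)) => // hlt.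
have eg := core hc Hsp Hli hgd (ltW hlt).
by rewrite eg ltxx in hlt.
Qed.

Lemma hinf : inf [set dmp cj toR ofR p 1 f g' | g' in [set g' | is_dual cj f g']]%classic
   = dmp cj toR ofR p 1 f h.
Proof.
apply/le_anti/andP; split.
  apply: (ge_inf _); last by exists h => //; exact: dual_h.
  by exists 0 => y [g' _ <-]; exact: dmp_ge0.
apply: lb_le_inf.
  by exists (dmp cj toR ofR p 1 f h); exists h => //; exact: dual_h.
by move=> y [g' hg' <-]; exact: hmin.
Qed.

Lemma opt1_iff g : opt_dual cj toR ofR p 1 f g <-> g = h.
Proof.
split.
  move=> [hgd heq]; apply: (core hc Hsp Hli hgd).
  by rewrite heq /= hinf.
by move=> ->; split; [exact: dual_h | rewrite /= hinf].
Qed.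

Lemma optm_iff m : (1 <= m)%N -> forall g, opt_dual cj toR ofR p m f g <-> g = h.
Proof.
elim: m => [//|m IH] _ g.
case: m IH => [|m] IH; first exact: opt1_iff.
have IH' := IH erefl.
have hset : [set dmp cj toR ofR p m.+2 f g' | g' in [set g' | opt_dual cj toR ofR p m.+1 f g']]%classic
   = [set dmp cj toR ofR p m.+2 f h]%classic.
  apply/seteqP; split => y.
    by move=> [g' /IH' -> <-].
  by move=> ->; exists h => //; apply/IH'.
split.
  by move=> [/IH' -> _].
by move=> ->; split; [apply/IH' | rewrite hset inf1].
Qed.
End Opt.
End Frames.

Lemma gen_cor41 : cor41_stmt cj toR ofR.
Proof.
move=> n N f p nN hf hp hpi cf c rho1 rho2 Hsp Hli.
have key := @optm_iff n N f hf p hp hpi c erefl Hsp Hli.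
split; first split.
- by apply/(key 1%N erefl).
- by move=> g /(key 1%N erefl g).
- by move=> m /andP [m1 _]; apply/(key m m1).
Qed.
End Gen.
Local Open Scope complex_scope.
Section C.
Variable R : realType.
Implicit Types (x y : R[i]) (r : R).
Lemma c_cjD x y : conjc (x + y) = conjc x + conjc y. Proof. exact: rmorphD. Qed.
Lemma c_cjM x y : conjc (x * y) = conjc x * conjc y. Proof. exact: rmorphM. Qed.
Lemma c_cjK x : conjc (conjc x) = x. Proof. exact: conjcK. Qed.
Lemma c_ofRD (a b : R) : (a + b)%:C = a%:C + b%:C :> R[i]. Proof. exact: rmorphD. Qed.
Lemma c_ofRM (a b : R) : (a * b)%:C = a%:C * b%:C :> R[i]. Proof. exact: rmorphM. Qed.
Lemma c_ofR1 : (1 : R)%:C = 1 :> R[i]. Proof. by []. Qed.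
Lemma c_cj_ofR r : conjc (r%:C) = r%:C. Proof. exact: conjc_real. Qed.
Lemma c_toRD x y : complex.Re (x + y) = complex.Re x + complex.Re y. Proof. by case: x => a b; case: y => c d; simpc. Qed.
Lemma c_toR_ofR r : complex.Re (r%:C) = r. Proof. by []. Qed.
Lemma c_toR_ofRM r x : complex.Re (r%:C * x) = r * complex.Re x. Proof. by case: x => a b; simpc. Qed.
Lemma c_zcz_real x : x * conjc x = (complex.Re (x * conjc x))%:C.
Proof. case: x => a b; simpc; apply/eqP; rewrite eq_complex /=; apply/andP; split => //; apply/eqP; ring. Qed.
Lemma c_zcz_ge0 x : 0 <= complex.Re (x * conjc x).
Proof. case: x => a b; simpc => /=. nra. Qed.
Lemma c_zcz_eq0 x : complex.Re (x * conjc x) = 0 -> x = 0.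
Proof. case: x => a b; simpc => /= H. have ha : a = 0 by nra. have hb : b = 0 by nra. by rewrite ha hb. Qed.
End C.


End Work.
Import Work.
Local Open Scope ring_scope.
Local Open Scope complex_scope.

Theorem corollary4p1 :
  (forall R : realType,
     cor41_stmt (K := R) id id id) /\
  (forall R : realType,
     cor41_stmt (K := R[i]) (@conjc R) (@Re R) (fun r : R => r%:C)).
Proof.
split => R.
  Import GRing.Theory Num.Theory.
  apply: gen_cor41 => //.
  - by move=> x; rewrite -expr2 sqr_ge0.
  - by move=> x /eqP; rewrite mulf_eq0 orbb => /eqP.
apply: gen_cor41.
- exact: c_cjD.
- exact: c_cjM.
- exact: c_cjK.
- exact: c_ofRD.
- exact: c_ofRM.
- exact: c_ofR1.
- exact: c_cj_ofR.
- exact: c_toRD.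
- exact: c_toR_ofR.
- exact: c_toR_ofRM.
- exact: c_zcz_real.
- exact: c_zcz_ge0.
- exact: c_zcz_eq0.
Qed.
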